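(* Let $X,Y$ be triangulable spaces, $f:X\to Y$ a homeomorphism, $k\in\mathbb{Z}$, and $\vec\varphi:X\to\mathbb{R}^n$, $\vec\psi:Y\to\mathbb{R}^n$ continuous functions with $\max_{x\in X}\|\vec\varphi(x)-\vec\psi(f(x))\|_\infty\le h$. Setting $\vec h=(h,\dots,h)$, for every $(\vec u,\vec v)\in\Delta^+$ we have $\rho_{(X,\vec\varphi),k}(\vec u-\vec h,\vec v+\vec h)\le\rho_{(Y,\vec\psi),k}(\vec u,\vec v)$.
   Context: A triangulable space is a space homeomorphic to the underlying space of a finite simplicial complex. $\|\cdot\|_\infty$ is the max-norm on $\mathbb{R}^n$. For $\vec u,\vec v\in\mathbb{R}^n$, $\vec u\preceq\vec v$ (resp. $\prec$) means $u_i\le v_i$ (resp. $u_i<v_i$) for all $i$; $\Delta^+=\{(\vec u,\vec v):\vec u\prec\vec v\}$. $X\langle\vec\varphi\preceq\vec u\rangle=\{x\in X:\varphi_i(x)\le u_i\ \forall i\}$. Homology is Čech homology with coefficients in a field. For $\vec u\prec\vec v$, $\rho_{(X,\vec\varphi),k}(\vec u,\vec v)$ is the rank of the map $\check H_k(X\langle\vec\varphi\preceq\vec u\rangle)\to\check H_k(X\langle\vec\varphi\preceq\vec v\rangle)$ induced by inclusion. *)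

(* Defs.v *)
From HB Require Import structures.
From mathcomp Require Import all_boot all_order all_algebra.
From mathcomp Require Import all_classical all_reals topology normedtype.

Set Implicit Arguments.
Unset Strict Implicit.
Unset Printing Implicit Defensive.

Import Order.TTheory GRing.Theory Num.Theory.
Import numFieldNormedType.Exports.
Local Open Scope classical_set_scope.
Local Open Scope ring_scope.

Definition homeomorphism (X Y : topologicalType) (f : X -> Y) : Prop :=
  continuous f /\
  exists g : Y -> X, continuous g /\ cancel f g /\ cancel g f.

Definition homeomorphism_from (T X : topologicalType) (S : set T) (g : T -> X)
  : Prop :=
  {within S, continuous g} /\
  exists g' : X -> T, continuous g' /\ (forall x, S (g' x)) /\
    (forall x, g (g' x) = x) /\ (forall t, S t -> g' (g t) = t).

Definition simplicial_complex (V : nat) (K : {set {set 'I_V}}) : Prop :=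
  (forall s, s \in K -> s != finset.set0) /\
  (forall s t : {set 'I_V}, s \in K -> t \subset s -> t != finset.set0 -> t \in K).

(* standard geometric realization |K| in R^V (vertex i |-> i-th basis vector) *)
Definition realization (R : realType) (V : nat) (K : {set {set 'I_V}})
  : set 'rV[R]_V :=
  [set x | (forall i, 0 <= x ord0 i) /\ \sum_i x ord0 i = 1 /\
           [set i | x ord0 i != 0]%SET \in K].

Definition triangulable (R : realType) (X : topologicalType) : Prop :=
  exists V (K : {set {set 'I_V}}) (g : 'rV[R]_V -> X),
    simplicial_complex K /\ homeomorphism_from (@realization R V K) g.

(* Cech homology (field coefficients) of a subspace A of X            *)
(*   = inverse limit, over finite open covers, of the (ordered)       *)
(*     simplicial homology of the nerves.                             *)

Section Cech.
Variables (F : fieldType) (X : topologicalType).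

(* a finite open cover of A (indexed by a finite type I), given by open sets
   of X; its trace on A is an open cover of A in the subspace topology *)
Definition open_cover (A : set X) (I : finType) (W : I -> set X) : Prop :=
  (forall i, open (W i)) /\ A `<=` \bigcup_i W i.

Definition osimplex (k : nat) (I : finType) := {ffun 'I_k.+1 -> I}.

Definition in_nerve (A : set X) (I : finType) (W : I -> set X) (k : nat)
  (s : osimplex k I) : Prop :=
  exists x, A x /\ forall j, W (s j) x.

Definition chain (k : nat) (I : finType) := {ffun osimplex k I -> F}.

Definition supported (A : set X) (I : finType) (W : I -> set X) (k : nat)
  (c : chain k I) : Prop :=
  forall s, c s != 0 -> in_nerve A W s.

Definition face (k : nat) (I : finType) (j : 'I_k.+2) (s : osimplex k.+1 I)
  : osimplex k I := [ffun i => s (lift j i)].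

Definition boundary (k : nat) (I : finType) (c : chain k.+1 I) : chain k I :=
  [ffun t => \sum_(s : osimplex k.+1 I) \sum_(j < k.+2)
                (-1) ^+ j * c s * (face j s == t)%:R].

Definition is_cycle (k : nat) (I : finType) : chain k I -> Prop :=
  match k with
  | 0 => fun _ => True
  | k'.+1 => fun c => boundary c = 0
  end.

Definition is_boundary (A : set X) (I : finType) (W : I -> set X) (k : nat)
  (d : chain k I) : Prop :=
  exists e : chain k.+1 I, supported A W e /\ boundary e = d.

Definition push (k : nat) (I J : finType) (lam : J -> I) (c : chain k J)
  : chain k I :=
  [ffun t => \sum_(s : osimplex k J | [ffun i => lam (s i)] == t) c s].

Definition cech_family (k : nat) :=
  forall (I : finType) (W : I -> set X), chain k I.

(* e represents an element of the Cech homology group H_k(A): its components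
   are cycles of the nerves, compatible (up to boundaries) with all the
   refinement projections *)
Definition cech_element (A : set X) (k : nat) (e : cech_family k) : Prop :=
  (forall (I : finType) (W : I -> set X), open_cover A W ->
     supported A W (e I W) /\ is_cycle (e I W)) /\
  (forall (I J : finType) (W : I -> set X) (V : J -> set X) (lam : J -> I),
     open_cover A W -> open_cover A V ->
     (forall j, V j `&` A `<=` W (lam j)) ->
     is_boundary A W (push lam (e J V) - e I W)).

(* For A `<=` B, the inclusion-induced map H_k(A) -> H_k(B) sends e to the
   family e restricted to the open covers of B (each of which is an open cover
   of A, whose A-nerve is a subcomplex of its B-nerve).
   rank_ge A B k m  <->  the rank of H_k(A) -> H_k(B) is at least m, i.e. there
   are m elements of H_k(A) whose images in H_k(B) are linearly independent. *)
Definition rank_ge_nat (A B : set X) (k : nat) (m : nat) : Prop :=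
  exists e : 'I_m -> cech_family k,
    (forall i, cech_element A (e i)) /\
    forall a : 'I_m -> F, (exists i, a i != 0) ->
      exists (I : finType) (W : I -> set X),
        open_cover B W /\
        ~ is_boundary B W [ffun t => \sum_i a i * e i I W t].

(* homology in negative degrees is 0 *)
Definition rank_ge (A B : set X) (k : int) (m : nat) : Prop :=
  match k with
  | Posz k' => rank_ge_nat A B k' m
  | Negz _ => m = 0%N
  end.

End Cech.

Definition sublevel (R : realType) (X : topologicalType) (n : nat)
  (phi : 'I_n -> X -> R) (u : 'I_n -> R) : set X :=
  [set x | forall i, phi i x <= u i].

Definition pbn_ge (R : realType) (F : fieldType) (X : topologicalType)
  (n : nat) (phi : 'I_n -> X -> R) (k : int) (u v : 'I_n -> R) (m : nat)
  : Prop :=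
  rank_ge F (sublevel phi u) (sublevel phi v) k m.

(* Main.v *)
Require Import Defs.
From HB Require Import structures.
From mathcomp Require Import all_boot all_order all_algebra.
From mathcomp Require Import all_classical all_reals topology normedtype.
From mathcomp Require Import lra.
Import Order.TTheory GRing.Theory Num.Theory.
Import numFieldNormedType.Exports.
Local Open Scope classical_set_scope.
Local Open Scope ring_scope.
Set Implicit Arguments.
Unset Strict Implicit.

Section Transport.
Variables (F : fieldType) (X Y : topologicalType) (f : X -> Y).

Definition tr {k : nat} (e : cech_family F X k) : cech_family F Y k :=
  fun I W => e I (fun j => f @^-1` W j).

Lemma supp_tr (A : set X) (A' : set Y) (I : finType) (W : I -> set Y) k
  (c : chain F k I) :
  (forall x, A x -> A' (f x)) ->
  supported A (fun j => f @^-1` W j) c -> supported A' W c.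
Proof.
move=> hA hs s /hs [x [Ax Hx]]; exists (f x); split; first exact: hA.
exact: Hx.
Qed.

Lemma bnd_tr (A : set X) (A' : set Y) (I : finType) (W : I -> set Y) k
  (c : chain F k I) :
  (forall x, A x -> A' (f x)) ->
  is_boundary A (fun j => f @^-1` W j) c -> is_boundary A' W c.
Proof.
move=> hA [e [se be]]; exists e; split => //; exact: supp_tr se.
Qed.

Lemma cech_tr (A : set X) (A' : set Y) k (e : cech_family F X k) :
  continuous f -> (forall x, A x -> A' (f x)) ->
  cech_element A e -> cech_element A' (tr e).
Proof.
move=> cf hA [h1 h2].
have oc : forall (I : finType) (W : I -> set Y), open_cover A' W ->
    open_cover A (fun j => f @^-1` W j).
  move=> I W [oW cW]; split.
    move=> i; exact: (open_comp (fun x _ => cf x) (oW i)).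
  move=> x /hA /cW [i _ Wi]; by exists i.
split.
  move=> I W /oc /h1 [s c]; split; [exact: (supp_tr hA s) | exact: c].
move=> I J W V lam /oc oW /oc oV hl.
apply: (bnd_tr hA); apply: h2 => // j x [Vx Ax].
exact: (hl j (f x) (conj Vx (hA x Ax))).
Qed.

End Transport.

Theorem mainTheorem5 (R : realType) (F : fieldType) (X Y : topologicalType)
  (n : nat) (k : int) (f : X -> Y)
  (phi : 'I_n -> X -> R) (psi : 'I_n -> Y -> R) (h : R)
  (u v : 'I_n -> R) (m : nat) :
  triangulable R X -> triangulable R Y -> homeomorphism f ->
  (forall i, continuous (phi i)) -> (forall i, continuous (psi i)) ->
  (forall x i, `|phi i x - psi i (f x)| <= h) ->
  (forall i, u i < v i) ->
  pbn_ge F phi k (fun i => u i - h) (fun i => v i + h) m ->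
  pbn_ge F psi k u v m.
Proof.
move=> _ _ [cf [g [cg [fgK gfK]]]] _ _ hh _.
rewrite /pbn_ge; case: k => [k|k] //=.
move=> [e [he hi]].
have hA : forall x, sublevel phi (fun i => u i - h) x -> sublevel psi u (f x).
  move=> x Hx i; have := hh x i; rewrite ler_norml => /andP[h1 h2].
  have := Hx i => /= ?; lra.
have hB : forall y, sublevel psi v y -> sublevel phi (fun i => v i + h) (g y).
  move=> y Hy i; have := hh (g y) i; rewrite gfK ler_norml => /andP[h1 h2].
  have := Hy i => /= ?; lra.
exists (fun i => tr f (e i)); split.
  move=> i; exact: cech_tr cf hA (he i).
move=> a /hi [I [W [[oW cW] nb]]].
exists I, (fun j => g @^-1` W j); split.
  split.
    move=> i; exact: (open_comp (fun x _ => cg x) (oW i)).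
  move=> y /hB /cW [i _ Wi]; by exists i.
rewrite /tr.
have EW : (fun j => f @^-1` (g @^-1` W j)) = W.
  apply: funext => j; apply: funext => x; rewrite /preimage /= fgK //.
rewrite EW.
move=> [c [sc bc]]; apply: nb; exists c; split; last exact: bc.
move=> s /sc [y [By Hy]]; exists (g y); split; first exact: hB.
exact: Hy.
Qed.
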